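(* Let $K\ge2$, $\varepsilon>0$ and $\gamma\in\mathcal{P}^\varepsilon(K)$. The function $$V_\gamma(F)=\log\Big(\sum_{k=1}^K\gamma_ke^{F_k}\Big)-\sum_{k=1}^K\gamma_kF_k,\qquad F\in\mathbb{R}^K,$$ is a candidate Lyapunov function for the equilibrium $F^*=0$ (modulo constants): $V_\gamma(F)\ge0$ with equality if and only if $\|F\|_{\mathbb L}=0$, and there exist $\alpha_1,\alpha_2\in\mathcal K_\infty$ such that $\alpha_1(\|F\|_{\mathbb L})\le V_\gamma(F)\le\alpha_2(\|F\|_{\mathbb L})$ for all $F\in\mathbb{R}^K$.
   Context: $\mathcal{P}^\varepsilon(K)$ is the set of probability vectors on $\{1,\dots,K\}$ with entries $\ge\varepsilon$. $\|F\|_{\mathbb L}=\inf_{\alpha\in\mathbb{R}}\|F-\alpha\mathbf 1\|$ (Euclidean norm, $\mathbf 1=(1,\dots,1)$), so $\|F\|_{\mathbb L}=0$ iff all $F_k$ are equal. A function $\alpha:\mathbb{R}_{\ge0}\to\mathbb{R}_{\ge0}$ is of class $\mathcal K_\infty$ if it is continuous, $\alpha(0)=0$, strictly increasing and unbounded. *)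

(* Defs.v *)
From HB Require Import structures.
From mathcomp Require Import all_boot all_order all_algebra.
From mathcomp Require Import all_classical all_reals all_analysis.
Set Implicit Arguments. Unset Strict Implicit. Unset Printing Implicit Defensive.
Import Order.TTheory GRing.Theory Num.Theory.
Import numFieldNormedType.Exports.
Local Open Scope ring_scope.
Local Open Scope classical_set_scope.

Definition Peps (R : realType) (K : nat) (eps : R) (g : 'I_K -> R) : Prop :=
  (forall k, eps <= g k) /\ \sum_(k < K) g k = 1.

Definition eucl_norm (R : realType) (K : nat) (F : 'I_K -> R) : R :=
  Num.sqrt (\sum_(k < K) (F k) ^+ 2).

Definition quotLnorm (R : realType) (K : nat) (F : 'I_K -> R) : R :=
  inf [set eucl_norm (fun k => F k - a) | a in [set: R]].

Definition Vgam (R : realType) (K : nat) (g F : 'I_K -> R) : R :=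
  ln (\sum_(k < K) g k * expR (F k)) - \sum_(k < K) g k * F k.

Definition Kinf (R : realType) (a : R -> R) : Prop :=
  [/\ (forall x, 0 <= x -> 0 <= a x),
      {within `[0, +oo[%classic, continuous a},
      a 0 = 0,
      (forall x y, 0 <= x -> x < y -> a x < a y) &
      (forall M, exists x, 0 <= x /\ M < a x)].

(* Main.v *)
Require Import Defs.
From HB Require Import structures.
From mathcomp Require Import all_boot all_order all_algebra.
From mathcomp Require Import all_classical all_reals all_analysis.
From mathcomp Require Import ring lra.
Import Order.TTheory GRing.Theory Num.Theory.
Import numFieldNormedType.Exports.
Set Implicit Arguments. Unset Strict Implicit.
Local Open Scope ring_scope.

Definition phi (R : realType) (t : R) := expR t - 1 - t.

Lemma phi_ge0 (R : realType) (t : R) : 0 <= phi t.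
Proof. rewrite /phi; have := expR_ge1Dx t; lra. Qed.

Lemma phi_lt (R : realType) (a b : R) : 0 <= a -> a < b -> phi a < phi b.
Proof.
move=> ha hab; rewrite /phi.
have -> : b = a + (b - a) by ring.
rewrite expRD.
have h1 := expR_ge1Dx a.
have h2 : 1 + (b - a) < expR (b - a) by apply: expR_gt1Dx; lra.
have h3 : 0 <= (expR a - 1) * (expR (b - a) - 1) by apply: mulr_ge0; lra.
lra.
Qed.

Lemma phi_le (R : realType) (a b : R) : 0 <= a -> a <= b -> phi a <= phi b.
Proof.
move=> ha; rewrite le_eqVlt => /orP [/eqP -> //| hab].
exact/ltW/phi_lt.
Qed.

Lemma phi0 (R : realType) : phi (0 : R) = 0.
Proof. by rewrite /phi expR0; lra. Qed.

Lemma phi_big (R : realType) (t : R) : 0 <= t -> t - 2 <= phi t.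
Proof.
move=> ht; rewrite /phi.
have := expR_ge1Dxn 1 ht.
have -> : ((1.+1)`!%:R : R) = 2 by [].
have := sqr_ge0 (t - 2).
lra.
Qed.

Lemma sum_g_const (R : realType) (K : nat) (g : 'I_K -> R) (a : R) :
  \sum_(k < K) g k = 1 -> \sum_(k < K) g k * a = a.
Proof. by move=> sg; rewrite -big_distrl /= sg mul1r. Qed.

Lemma Vgam_bounds (R : realType) (K : nat) (eps : R) (g F : 'I_K -> R) (i j : 'I_K) :
  0 < eps -> Peps eps g -> (forall k, F j <= F k <= F i) ->
  ln (1 + eps * phi (eps * (F i - F j))) <= Vgam g F /\ Vgam g F <= F i - F j.
Proof.
move=> he [ge sg] hF.
have g0 : forall k, 0 <= g k by move=> k; have := ge k; lra.
set c := \sum_(k < K) g k * F k.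
set X := \sum_(k < K) g k * expR (F k).
have cj : F j <= c.
  rewrite -(sum_g_const (F j) sg) /c; apply: ler_sum => k _.
  by apply: ler_wpM2l => //; case/andP: (hF k).
have ci : c <= F i.
  rewrite -(sum_g_const (F i) sg) /c; apply: ler_sum => k _.
  by apply: ler_wpM2l => //; case/andP: (hF k).
have Xj : expR (F j) <= X.
  rewrite -(sum_g_const (expR (F j)) sg) /X; apply: ler_sum => k _.
  by apply: ler_wpM2l => //; rewrite ler_expR; case/andP: (hF k).
have Xi : X <= expR (F i).
  rewrite -(sum_g_const (expR (F i)) sg) /X; apply: ler_sum => k _.
  by apply: ler_wpM2l => //; rewrite ler_expR; case/andP: (hF k).
have Xpos : 0 < X by apply: lt_le_trans Xj; exact: expR_gt0.
split; last first.
  rewrite /Vgam -/c -/X.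
  have : ln X <= F i.
    by rewrite -[X in _ <= X]expRK ler_ln ?posrE ?expR_gt0.
  lra.
set Y := \sum_(k < K) g k * expR (F k - c).
have XY : X = expR c * Y.
  rewrite /Y big_distrr /X; apply: eq_bigr => k _.
  by rewrite /= mulrCA -expRD addrCA subrr addr0.
have step1 : eps * (F i - F j) <= F i - c.
  have : \sum_(k < K) g k * (F i - F k) = F i - c.
    under eq_bigr => k _ do rewrite mulrBr.
    by rewrite sumrB sum_g_const.
  move=> <-.
  rewrite (bigD1 j) //=.
  have : 0 <= \sum_(k < K | k != j) g k * (F i - F k).
    apply: sumr_ge0 => k _; apply: mulr_ge0 => //.
    by case/andP: (hF k) => _; lra.
  have : eps * (F i - F j) <= g j * (F i - F j).
    apply: ler_wpM2r; last exact: ge.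
    by case/andP: (hF j); lra.
  lra.
have step2 : 1 + g i * phi (F i - c) <= Y.
  have e1 : \sum_(k < K) g k * (1 + (F k - c)) = 1.
    rewrite -(sum_g_const 1 sg); under eq_bigr => k _ do rewrite mulrDr.
    rewrite big_split /= sum_g_const // (sum_g_const 1 sg).
    under eq_bigr => k _ do rewrite mulrBr.
    rewrite sumrB -/c sum_g_const //; lra.
  have e2 : Y - 1 = \sum_(k < K) g k * phi (F k - c).
    rewrite -e1 /Y -sumrB; apply: eq_bigr => k _.
    rewrite /phi; ring.
  have : g i * phi (F i - c) <= \sum_(k < K) g k * phi (F k - c).
    rewrite (bigD1 i) //=; rewrite lerDl.
    by apply: sumr_ge0 => k _; apply: mulr_ge0 => //; exact: phi_ge0.
  lra.
have step3 : eps * phi (eps * (F i - F j)) <= g i * phi (F i - c).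
  apply: (@le_trans _ _ (eps * phi (F i - c))).
    apply: ler_wpM2l; first lra.
    apply: phi_le => //; apply: mulr_ge0; first lra.
    by case/andP: (hF j); lra.
  by apply: ler_wpM2r; [exact: phi_ge0| exact: ge].
have pe : 0 <= eps * phi (eps * (F i - F j)) by apply: mulr_ge0; [lra|exact: phi_ge0].
have Ypos : 0 < Y by lra.
have lnX : ln X = c + ln Y.
  by rewrite XY lnM ?posrE ?expR_gt0 // expRK.
rewrite /Vgam -/c -/X lnX.
have : ln (1 + eps * phi (eps * (F i - F j))) <= ln Y.
  by rewrite ler_ln ?posrE; lra.
lra.
Qed.

Lemma eucl_ge0 (R : realType) (K : nat) (F : 'I_K -> R) : 0 <= eucl_norm F.
Proof. exact: sqrtr_ge0. Qed.

Lemma eucl_ge_coord (R : realType) (K : nat) (F : 'I_K -> R) k : `|F k| <= eucl_norm F.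
Proof.
rewrite /eucl_norm -sqrtr_sqr ler_sqrt; last by apply: sumr_ge0 => l _; exact: sqr_ge0.
rewrite (bigD1 k) //= lerDl; apply: sumr_ge0 => l _; exact: sqr_ge0.
Qed.

Lemma q_facts (R : realType) (K : nat) (F : 'I_K -> R) (i j : 'I_K) :
  (forall k, F j <= F k <= F i) ->
  [/\ 0 <= quotLnorm F, quotLnorm F <= K%:R * (F i - F j) & F i - F j <= 2 * quotLnorm F].
Proof.
move=> hF.
rewrite /quotLnorm; set S := (X in inf X).
have Sne : (S !=set0)%classic by exists (eucl_norm (fun k => F k - 0)); exists 0.
have Slb : has_lbound S by exists 0 => _ [a _ <-]; exact: eucl_ge0.
have D0 : 0 <= F i - F j by case/andP: (hF i); lra.
split.
- by apply: lb_le_inf => // _ [a _ <-]; exact: eucl_ge0.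
- apply: (@le_trans _ _ (eucl_norm (fun k => F k - F j))).
    by apply: ge_inf => //; exists (F j).
  rewrite /eucl_norm.
  have K1 : (1 <= K)%N := leq_ltn_trans (leq0n i) (ltn_ord i).
  have KR : (1 : R) <= K%:R by rewrite ler1n.
  rewrite -[X in _ <= X]ger0_norm; last by apply: mulr_ge0.
  rewrite -sqrtr_sqr ler_sqrt; last exact: sqr_ge0.
  apply: (@le_trans _ _ (\sum_(k < K) (F i - F j) ^+ 2)).
    apply: ler_sum => k _; rewrite ler_sqr ?nnegrE //; last by case/andP: (hF k); lra.
    by case/andP: (hF k); lra.
  rewrite sumr_const card_ord.
  have -> : (F i - F j) ^+ 2 *+ K = K%:R * (F i - F j) ^+ 2 by rewrite mulr_natl.
  rewrite exprMn; apply: ler_wpM2r; first exact: sqr_ge0.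
  nra.
- have : lbound S ((F i - F j) / 2).
    move=> _ [a _ <-].
    have h1 := eucl_ge_coord (fun k => F k - a) i.
    have h2 := eucl_ge_coord (fun k => F k - a) j.
    have h3 := ler_norm (F i - a).
    have h4 : -(F j - a) <= `|F j - a| by rewrite -normrN ler_norm.
    rewrite /=.
    simpl in h1, h2; lra.
  move=> /(lb_le_inf Sne); lra.
Qed.

Lemma ex_maxmin (R : realType) (K : nat) (F : 'I_K -> R) (i0 : 'I_K) :
  exists i j, forall k, F j <= F k <= F i.
Proof.
case: (@arg_maxP _ _ _ i0 predT F isT) => i _ Hi.
case: (@arg_minP _ _ _ i0 predT F isT) => j _ Hj.
by exists i, j => k; apply/andP; split; [exact: Hj | exact: Hi].
Qed.

Lemma h_cont (R : realType) (eps c : R) :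
  continuous (fun x : R => 1 + eps * phi (c * x)).
Proof.
move=> x; rewrite /phi.
apply: cvgD; first exact: cvg_cst.
apply: cvgM; first exact: cvg_cst.
have hl : {for x, continuous (fun y : R => c * y)}.
  by apply: cvgM; [exact: cvg_cst | exact: cvg_id].
apply: cvgB; last exact: hl.
apply: cvgB; last exact: cvg_cst.
exact: (continuous_comp hl (@continuous_expR R _)).
Qed.

Theorem lemma2 (R : realType) (K : nat) (eps : R) (g : 'I_K -> R) :
  (2 <= K)%N -> 0 < eps -> Peps eps g ->
  (forall F : 'I_K -> R, 0 <= Vgam g F) /\
  (forall F : 'I_K -> R, Vgam g F = 0 <-> quotLnorm F = 0) /\
  (exists a1 a2 : R -> R, Kinf a1 /\ Kinf a2 /\
     forall F : 'I_K -> R, a1 (quotLnorm F) <= Vgam g F /\ Vgam g F <= a2 (quotLnorm F)).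
Proof.
move=> hK he hg.
have K0 : (0 < K)%N by apply: leq_trans hK.
pose i0 : 'I_K := Ordinal K0.
have KR : (0 : R) < K%:R by rewrite ltr0n.
pose c := eps / K%:R.
have c0 : 0 < c by apply: divr_gt0.
pose a1 := fun x : R => ln (1 + eps * phi (c * x)).
pose a2 := fun x : R => 2 * x.
have a1_ge0 : forall x, 0 <= a1 x.
  move=> x; apply: ln_ge0.
  have := phi_ge0 (c * x); have := mulr_ge0 (ltW he) (phi_ge0 (c * x)); lra.
have a10 : a1 0 = 0 by rewrite /a1 mulr0 phi0 mulr0 addr0 ln1.
have a1_lt : forall x y, 0 <= x -> x < y -> a1 x < a1 y.
  move=> x y hx hxy; rewrite /a1.
  have hcxy : c * x < c * y by rewrite ltr_pM2l.
  have hp := phi_lt (mulr_ge0 (ltW c0) hx) hcxy.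
  have p0 := mulr_ge0 (ltW he) (phi_ge0 (c * x)).
  rewrite ltr_ln ?posrE; [|lra|].
    by rewrite ltrD2l ltr_pM2l.
  have : eps * phi (c * x) < eps * phi (c * y) by rewrite ltr_pM2l.
  lra.
have Ka1 : Kinf a1.
  split => //.
  - apply: continuous_subspaceT => x.
    apply: continuous_comp; first exact: h_cont.
    apply: continuous_ln.
    have := mulr_ge0 (ltW he) (phi_ge0 (c * x)); rewrite /=; lra.
  - move=> M; pose t := expR M / eps + 2.
    have t0 : 0 <= t by rewrite /t; apply: addr_ge0 => //; apply: divr_ge0; [exact: expR_ge0|lra].
    exists (t / c); split; first by apply: divr_ge0; lra.
    rewrite /a1 mulrCA divff ?mulr1; last by apply: lt0r_neq0.

    have hb := phi_big t0.
    have : expR M <= eps * phi t.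
      have -> : expR M = eps * (t - 2) by rewrite /t addrK mulrC divfK // lt0r_neq0.
      by apply: ler_wpM2l => //; lra.
    move=> hM.
    rewrite -ltr_expR lnK ?posrE; first lra.
    have := expR_ge0 M; lra.
have Ka2 : Kinf a2.
  split; rewrite /a2.
  - by move=> x hx; lra.
  - apply: continuous_subspaceT => x.
    by apply: cvgM; [exact: cvg_cst | exact: cvg_id].
  - by rewrite mulr0.
  - by move=> x y _ hxy; lra.
  - move=> M; exists (`|M| + 1); have := ler_norm M; have := normr_ge0 M; split; lra.
have bounds : forall F : 'I_K -> R, a1 (quotLnorm F) <= Vgam g F /\ Vgam g F <= a2 (quotLnorm F).
  move=> F; have [i [j hF]] := ex_maxmin F i0.
  have [q0 qD Dq] := q_facts hF.
  have [lo up] := Vgam_bounds he hg hF.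
  split; last by rewrite /a2; lra.
  apply: le_trans lo; rewrite /a1.
  have D0 : 0 <= F i - F j by case/andP: (hF i); lra.
  rewrite ler_ln ?posrE; first last.
  - have := mulr_ge0 (ltW he) (phi_ge0 (eps * (F i - F j))); lra.
  - have := mulr_ge0 (ltW he) (phi_ge0 (c * quotLnorm F)); lra.
  rewrite lerD2l; apply: ler_wpM2l; first lra.
  apply: phi_le; first by apply: mulr_ge0; lra.
  rewrite /c -mulrA; apply: ler_wpM2l; first lra.
  rewrite ler_pdivrMl //; lra.
split.
  by move=> F; have [h _] := bounds F; exact: le_trans (a1_ge0 _) h.
split; last by exists a1, a2.
move=> F; have [h1 h2] := bounds F.
have [i [j hF]] := ex_maxmin F i0.
have [q0 _ _] := q_facts hF.
split => [V0|q00].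
  apply/eqP; rewrite eq_le q0 andbT; apply/negP => /negP; rewrite -ltNge => qpos.
  have := a1_lt _ _ (lexx 0) qpos; rewrite a10; lra.
have h3 := le_trans (a1_ge0 _) h1.
move: h2; rewrite /a2 q00 mulr0 => h2; lra.
Qed.
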